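(* Let $A$ be an associative algebra, $M$ an $A$-bimodule, $H:A\otimes A\to M$ a Hochschild $2$-cocycle, and $\{ T_\alpha : M \to A \}_{\alpha \in \Omega}$ an $H$-twisted $\mathcal{O}$-operator family. Define on $M$ the operations $u \ast_{\alpha, \beta} v = T_\alpha (u) \cdot v + u \cdot T_\beta (v) + H (T_\alpha (u), T_\beta (v))$, and define bilinear maps $\triangleright_{\alpha,\beta}: M\otimes A\to A$, $\triangleleft_{\alpha,\beta}: A\otimes M\to A$ by $$u \triangleright_{\alpha, \beta} a := T_\alpha (u) \cdot a - T_{\alpha \beta} (u \cdot a) - T_{\alpha \beta} \big( H (T_\alpha (u), a) \big),\qquad a \triangleleft_{\alpha, \beta} u := a \cdot T_\beta (u) - T_{\alpha \beta} (a \cdot u) - T_{\alpha \beta} \big( H (a, T_\beta (u)) \big).$$ Then $(M,\{\ast_{\alpha,\beta}\}_{\alpha,\beta\in\Omega})$ is an $\Omega$-associative algebra and $(A, \{ \triangleright_{\alpha, \beta}, \triangleleft_{\alpha, \beta} \}_{\alpha, \beta \in \Omega})$ is a bimodule over it (with $\triangleright$ the left action and $\triangleleft$ the right action).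
   Context: $\Omega$ is a semigroup. A Hochschild $2$-cocycle is a bilinear $H$ with $a \cdot H (b, c) - H ( a \cdot b, c)+ H (a, b \cdot c) - H (a, b) \cdot c =0$. An $H$-twisted $\mathcal{O}$-operator family: linear maps $T_\alpha:M\to A$ with $T_\alpha (u) \cdot T_\beta (v) = T_{\alpha \beta} \big( T_\alpha (u) \cdot v + u \cdot T_\beta (v) + H (T_\alpha (u), T_\beta (v)) \big)$ for all $u,v,\alpha,\beta$. An $\Omega$-associative algebra is a vector space $B$ with bilinear maps $\{\cdot_{\alpha,\beta}\}_{\alpha,\beta\in\Omega}$ with $(a \cdot_{\alpha , \beta} b) \cdot_{\alpha \beta, \gamma} c = a \cdot_{\alpha, \beta \gamma} (b \cdot_{\beta, \gamma} c)$ for all $a,b,c$, $\alpha,\beta,\gamma$. A bimodule over it is a vector space $N$ with bilinear maps $B\otimes N\to N$, $(a,n)\mapsto a\cdot_{\alpha,\beta}n$ and $N\otimes B\to N$, $(n,a)\mapsto n\cdot_{\alpha,\beta}a$ ($\alpha,\beta\in\Omega$) such that $(a \cdot_{\alpha , \beta} b) \cdot_{\alpha \beta, \gamma} n = a \cdot_{\alpha, \beta \gamma} (b \cdot_{\beta, \gamma} n)$, $(a \cdot_{\alpha , \beta} n) \cdot_{\alpha \beta, \gamma} b = a \cdot_{\alpha, \beta \gamma} (n \cdot_{\beta, \gamma} b)$, $(n \cdot_{\alpha , \beta} a) \cdot_{\alpha \beta, \gamma} b = n \cdot_{\alpha, \beta \gamma} (a \cdot_{\beta, \gamma} b)$. 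*)

(* Defs.v *)
(* Vector spaces over a field K are lmodType K; algebra and
   module products are given as explicit bilinear maps (algebras need not be
   unital). *)
From mathcomp Require Import all_boot all_order all_algebra.
Set Implicit Arguments. Unset Strict Implicit. Unset Printing Implicit Defensive.
Import GRing.Theory.
Local Open Scope ring_scope.

Definition bilinear_map (K : fieldType) (U V W : lmodType K) (f : U -> V -> W) : Prop :=
  (forall (k : K) (x y : U) (z : V), f (k *: x + y) z = k *: f x z + f y z) /\
  (forall (k : K) (x : U) (y z : V), f x (k *: y + z) = k *: f x y + f x z).

Definition linear_map (K : fieldType) (U V : lmodType K) (f : U -> V) : Prop :=
  forall (k : K) (x y : U), f (k *: x + y) = k *: f x + f y.

Definition assoc_algebra (K : fieldType) (A : lmodType K) (mul : A -> A -> A) : Prop :=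
  bilinear_map mul /\ forall a b c, mul (mul a b) c = mul a (mul b c).

Definition bimodule (K : fieldType) (A M : lmodType K) (mul : A -> A -> A)
  (l : A -> M -> M) (r : M -> A -> M) : Prop :=
  [/\ bilinear_map l, bilinear_map r,
      (forall a b m, l (mul a b) m = l a (l b m)),
      (forall a m b, r (l a m) b = l a (r m b)) &
      (forall m a b, r (r m a) b = r m (mul a b))].

Definition hochschild_2cocycle (K : fieldType) (A M : lmodType K) (mul : A -> A -> A)
  (l : A -> M -> M) (r : M -> A -> M) (H : A -> A -> M) : Prop :=
  bilinear_map H /\
  forall a b c, l a (H b c) - H (mul a b) c + H a (mul b c) - r (H a b) c = 0.

Definition semigroup_op (Omega : Type) (op : Omega -> Omega -> Omega) : Prop :=
  forall x y z, op (op x y) z = op x (op y z).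

Definition twisted_O_family (K : fieldType) (A M : lmodType K) (Omega : Type)
  (op : Omega -> Omega -> Omega) (mul : A -> A -> A)
  (l : A -> M -> M) (r : M -> A -> M) (H : A -> A -> M) (T : Omega -> M -> A) : Prop :=
  (forall al, linear_map (T al)) /\
  forall (al be : Omega) (u v : M),
    mul (T al u) (T be v) = T (op al be) (l (T al u) v + r u (T be v) + H (T al u) (T be v)).

Definition Omega_assoc_algebra (K : fieldType) (B : lmodType K) (Omega : Type)
  (op : Omega -> Omega -> Omega) (m : Omega -> Omega -> B -> B -> B) : Prop :=
  (forall al be, bilinear_map (m al be)) /\
  forall al be ga a b c, m (op al be) ga (m al be a b) c = m al (op be ga) a (m be ga b c).

Definition Omega_bimodule (K : fieldType) (B N : lmodType K) (Omega : Type)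
  (op : Omega -> Omega -> Omega) (m : Omega -> Omega -> B -> B -> B)
  (l : Omega -> Omega -> B -> N -> N) (r : Omega -> Omega -> N -> B -> N) : Prop :=
  [/\ (forall al be, bilinear_map (l al be)), (forall al be, bilinear_map (r al be)),
      (forall al be ga (a b : B) (n : N),
          l (op al be) ga (m al be a b) n = l al (op be ga) a (l be ga b n)),
      (forall al be ga (a : B) (n : N) (b : B),
          r (op al be) ga (l al be a n) b = l al (op be ga) a (r be ga n b)) &
      (forall al be ga (n : N) (a b : B),
          r (op al be) ga (r al be n a) b = r al (op be ga) n (m be ga a b))].

Definition ast (K : fieldType) (A M : lmodType K) (Omega : Type)
  (l : A -> M -> M) (r : M -> A -> M) (H : A -> A -> M) (T : Omega -> M -> A)
  (al be : Omega) (u v : M) : M :=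
  l (T al u) v + r u (T be v) + H (T al u) (T be v).

Definition tri (K : fieldType) (A M : lmodType K) (Omega : Type)
  (op : Omega -> Omega -> Omega) (mul : A -> A -> A)
  (r : M -> A -> M) (H : A -> A -> M) (T : Omega -> M -> A)
  (al be : Omega) (u : M) (a : A) : A :=
  mul (T al u) a - T (op al be) (r u a) - T (op al be) (H (T al u) a).

Definition tle (K : fieldType) (A M : lmodType K) (Omega : Type)
  (op : Omega -> Omega -> Omega) (mul : A -> A -> A)
  (l : A -> M -> M) (H : A -> A -> M) (T : Omega -> M -> A)
  (al be : Omega) (a : A) (u : M) : A :=
  mul a (T be u) - T (op al be) (l a u) - T (op al be) (H a (T be u)).

(* Main.v *)
Require Import Defs.
From mathcomp Require Import all_boot all_order all_algebra.
Set Implicit Arguments. Unset Strict Implicit. Unset Printing Implicit Defensive.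
Import GRing.Theory.
Local Open Scope ring_scope.

Section Aux.
Variable K : fieldType.
Variables U V W : lmodType K.

Lemma bil_Dl (f : U -> V -> W) : bilinear_map f -> forall x y z, f (x + y) z = f x z + f y z.
Proof. by case=> h _ x y z; rewrite -[x]scale1r h !scale1r. Qed.
Lemma bil_Dr (f : U -> V -> W) : bilinear_map f -> forall x y z, f x (y + z) = f x y + f x z.
Proof. by case=> _ h x y z; rewrite -[y]scale1r h !scale1r. Qed.
Lemma bil_Nl (f : U -> V -> W) : bilinear_map f -> forall x z, f (- x) z = - f x z.
Proof.
case=> h h' x z.
have h0 : f 0 z = 0.
  have := h 1 0 0 z; rewrite !scale1r addr0.
  by move/(congr1 (fun t => t - f 0 z)); rewrite addrK subrr.
by rewrite -scaleN1r -[_ *: x]addr0 h h0 addr0 scaleN1r.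
Qed.
Lemma bil_Nr (f : U -> V -> W) : bilinear_map f -> forall x z, f x (- z) = - f x z.
Proof.
case=> h h' x z.
have h0 : f x 0 = 0.
  have := h' 1 x 0 0; rewrite !scale1r addr0.
  by move/(congr1 (fun t => t - f x 0)); rewrite addrK subrr.
by rewrite -scaleN1r -[_ *: z]addr0 h' h0 addr0 scaleN1r.
Qed.
Lemma lin_D (f : U -> V) : linear_map f -> forall x y, f (x + y) = f x + f y.
Proof. by move=> h x y; rewrite -[x]scale1r h !scale1r. Qed.
Lemma lin_N (f : U -> V) : linear_map f -> forall x, f (- x) = - f x.
Proof.
move=> h x.
have h0 : f 0 = 0.
  have := h 1 0 0; rewrite !scale1r addr0.
  by move/(congr1 (fun t => t - f 0)); rewrite addrK subrr.
by rewrite -scaleN1r -[_ *: x]addr0 h h0 addr0 scaleN1r.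
Qed.
End Aux.

Ltac bring u s :=
  match s with
  | ?v + _ => unify v u
  | ?a + ?r => bring u r; rewrite (addrCA a u)
  end.

Ltac zcancel :=
  repeat match goal with
  | |- - ?t + ?r = 0 => bring t r; rewrite (addKr t)
  | |- ?t + ?r = 0 => bring (- t) r; rewrite (addNKr t)
  end.

Ltac zsolve :=
  apply/eqP; rewrite -subr_eq0; apply/eqP;
  rewrite ?opprD ?opprK -[LHS]addr0 -?addrA; zcancel; try done.


Theorem theorem4p4 (K : fieldType) (A M : lmodType K) (Omega : Type)
  (op : Omega -> Omega -> Omega) (mul : A -> A -> A)
  (l : A -> M -> M) (r : M -> A -> M) (H : A -> A -> M) (T : Omega -> M -> A) :
  semigroup_op op ->
  assoc_algebra mul ->
  bimodule mul l r ->
  hochschild_2cocycle mul l r H ->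
  twisted_O_family op mul l r H T ->
  Omega_assoc_algebra op (ast l r H T) /\
  Omega_bimodule op (ast l r H T) (tri op mul r H T) (tle op mul l H T).
Proof.
move=> hop [mB massoc] [lB rB lmul lr rmul] [HB Hcoc] [Tlin TO].
have cocy : forall a b c, r (H a b) c = l a (H b c) + H a (mul b c) - H (mul a b) c.
  move=> a b c; have := Hcoc a b c.
  move/eqP; rewrite subr_eq0 => /eqP <-.
  by rewrite addrAC.
have mDl := bil_Dl mB; have mDr := bil_Dr mB; have mNl := bil_Nl mB; have mNr := bil_Nr mB.
have lDl := bil_Dl lB; have lDr := bil_Dr lB; have lNl := bil_Nl lB; have lNr := bil_Nr lB.
have rDl := bil_Dl rB; have rDr := bil_Dr rB; have rNl := bil_Nl rB; have rNr := bil_Nr rB.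
have HDl := bil_Dl HB; have HDr := bil_Dr HB; have HNl := bil_Nl HB; have HNr := bil_Nr HB.
have TD : forall g x y, T g (x + y) = T g x + T g y by move=> g; exact: lin_D.
have TN : forall g x, T g (- x) = - T g x by move=> g; exact: lin_N.
have [mZl mZr] := mB; have [lZl lZr] := lB; have [rZl rZr] := rB; have [HZl HZr] := HB.
have TZ : forall g k x y, T g (k *: x + y) = k *: T g x + T g y by move=> g; exact: Tlin.
have TO1 : forall a b c u v, mul (T a u) (T (op b c) v) = T (op a (op b c)) (l (T a u) v + r u (T (op b c) v) + H (T a u) (T (op b c) v)) by move=> *; exact: TO.
have TO2 : forall a b c u v, mul (T (op a b) u) (T c v) = T (op (op a b) c) (l (T (op a b) u) v + r u (T c v) + H (T (op a b) u) (T c v)) by move=> *; exact: TO.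
split.
  split.
    move=> al be; split=> k x y z; rewrite /ast;
      rewrite ?(TZ, lZl, lZr, rZl, rZr, HZl, HZr, scalerDr, scalerN); zsolve.
  move=> al be ga u v w; rewrite /ast -!TO.
  rewrite !(lDl, lDr, lNl, lNr, rDl, rDr, rNl, rNr, HDl, HDr, HNl, HNr).
  rewrite !(lmul, lr, rmul, cocy).
  zsolve.
split.
- move=> al be; split=> k x y z; rewrite /tri;
    rewrite ?(TZ, mZl, mZr, rZl, rZr, HZl, HZr);
    rewrite ?(TZ, TD, TN, mZl, mZr, rZl, rZr, HZl, HZr, scalerDr, scalerN); zsolve.
- move=> al be; split=> k x y z; rewrite /tle;
    rewrite ?(TZ, mZl, mZr, lZl, lZr, HZl, HZr);
    rewrite ?(TZ, TD, TN, mZl, mZr, lZl, lZr, HZl, HZr, scalerDr, scalerN); zsolve.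
- move=> al be ga a b n; rewrite /tri /tle /ast -?TO ?massoc;
  rewrite ?(massoc, TD, TN, mDl, mDr, mNl, mNr, lDl, lDr, lNl, lNr, rDl, rDr, rNl, rNr, HDl, HDr, HNl, HNr);
  rewrite ?TO1 ?TO2;
  rewrite ?(massoc, TD, TN, mDl, mDr, mNl, mNr, lDl, lDr, lNl, lNr, rDl, rDr, rNl, rNr, HDl, HDr, HNl, HNr);
  rewrite ?hop ?(lmul, lr, rmul, cocy);
  rewrite ?(massoc, TD, TN, mDl, mDr, mNl, mNr, lDl, lDr, lNl, lNr, rDl, rDr, rNl, rNr, HDl, HDr, HNl, HNr);
  zsolve.
- move=> al be ga a b n; rewrite /tri /tle /ast -?TO ?massoc;
  rewrite ?(massoc, TD, TN, mDl, mDr, mNl, mNr, lDl, lDr, lNl, lNr, rDl, rDr, rNl, rNr, HDl, HDr, HNl, HNr);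
  rewrite ?TO1 ?TO2;
  rewrite ?(massoc, TD, TN, mDl, mDr, mNl, mNr, lDl, lDr, lNl, lNr, rDl, rDr, rNl, rNr, HDl, HDr, HNl, HNr);
  rewrite ?hop ?(lmul, lr, rmul, cocy);
  rewrite ?(massoc, TD, TN, mDl, mDr, mNl, mNr, lDl, lDr, lNl, lNr, rDl, rDr, rNl, rNr, HDl, HDr, HNl, HNr);
  zsolve.
- move=> al be ga a b n; rewrite /tri /tle /ast -?TO ?massoc;
  rewrite ?(massoc, TD, TN, mDl, mDr, mNl, mNr, lDl, lDr, lNl, lNr, rDl, rDr, rNl, rNr, HDl, HDr, HNl, HNr);
  rewrite ?TO1 ?TO2;
  rewrite ?(massoc, TD, TN, mDl, mDr, mNl, mNr, lDl, lDr, lNl, lNr, rDl, rDr, rNl, rNr, HDl, HDr, HNl, HNr);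
  rewrite ?hop ?(lmul, lr, rmul, cocy);
  rewrite ?(massoc, TD, TN, mDl, mDr, mNl, mNr, lDl, lDr, lNl, lNr, rDl, rDr, rNl, rNr, HDl, HDr, HNl, HNr);
  zsolve.
Qed.
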